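(* Let $k\ge 1$ be an integer and let $\bm\delta=(\delta_1,\dots,\delta_k)$ be any fixed sequence of positive reals. Then \[C_k(n,\dots,n)=\begin{cases}\Omega\left(n^{\lfloor (k+1)/3\rfloor+1}\right), & \text{if } k\equiv 0,2 \pmod 3,\\ \Omega\left(n^{(k-1)/3}\,u_2(n)\right), & \text{if } k\equiv 1\pmod 3.\end{cases}\]
   Context: For a fixed $\bm\delta=(\delta_1,\dots,\delta_k)$ and sets $P_1,\dots,P_{k+1}\subseteq\mathbb{R}^2$, let $C_k(P_1,\dots,P_{k+1})$ be the number of $(k+1)$-tuples $(p_1,\dots,p_{k+1})$ with $p_i\in P_i$ for all $i$, $\|p_i-p_{i+1}\|=\delta_i$ for all $i\in[k]$, and $p_i\ne p_j$ for $i\ne j$. Let $C_k(n_1,\dots,n_{k+1})$ be the maximum of $C_k(P_1,\dots,P_{k+1})$ over all $P_1,\dots,P_{k+1}\subseteq\mathbb{R}^2$ with $|P_i|\le n_i$. $u_2(n)$ denotes the maximum number of pairs of points at distance exactly $1$ in a set of $n$ points in $\mathbb{R}^2$. Implicit constants may depend on $k$ and $\bm\delta$. *)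

(* Defs.v *)
From Stdlib Require Import Reals Lra Lia List ListDec Arith Bool ClassicalEpsilon.
Import ListNotations.
Open Scope R_scope.

Definition pt : Type := (R * R)%type.

Definition pt_eq_dec (p q : pt) : {p = q} + {p <> q}.
Proof.
  destruct p as [a b], q as [c d].
  destruct (Req_EM_T a c) as [H1|H1]; destruct (Req_EM_T b d) as [H2|H2];
    subst; [left; reflexivity | right; intro H; inversion H; auto ..].
Defined.

Definition dist (p q : pt) : R :=
  sqrt ((fst p - fst q) ^ 2 + (snd p - snd q) ^ 2).

Definition distb (p q : pt) (d : R) : bool :=
  if Req_EM_T (dist p q) d then true else false.

Fixpoint tuples (P : nat -> list pt) (m : nat) : list (list pt) :=
  match m with
  | O => map (fun p => [p]) (P O)
  | S m' => flat_map (fun t => map (fun p => t ++ [p]) (P m)) (tuples P m')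
  end.

Definition valid_tuple (k : nat) (delta : nat -> R) (t : list pt) : bool :=
  forallb (fun i => distb (nth i t (0,0)) (nth (S i) t (0,0)) (delta i)) (seq 0 k)
  && (if NoDup_dec pt_eq_dec t then true else false).

(* C_k(P_1,...,P_{k+1}) with P_{i+1} = P i (0-indexed). *)
Definition Ck_count (k : nat) (delta : nat -> R) (P : nat -> list pt) : nat :=
  length (filter (valid_tuple k delta) (tuples P k)).

(* The maximum of a set of naturals (classical choice); it is the intended
   value whenever the maximum exists. *)
Definition maxnat (S : nat -> Prop) : nat :=
  epsilon (inhabits 0%nat) (fun m => S m /\ forall m', S m' -> (m' <= m)%nat).

Definition Ck_max (k : nat) (delta : nat -> R) (n : nat) : nat :=
  maxnat (fun m => exists P : nat -> list pt,
            (forall i, (i <= k)%nat -> NoDup (P i) /\ (length (P i) <= n)%nat)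
            /\ Ck_count k delta P = m).

Definition unit_pairs (P : list pt) : nat :=
  length (filter (fun ij => Nat.ltb (fst ij) (snd ij)
                    && distb (nth (fst ij) P (0,0)) (nth (snd ij) P (0,0)) 1)
            (list_prod (seq 0 (length P)) (seq 0 (length P)))).

Definition u2 (n : nat) : nat :=
  maxnat (fun m => exists P : list pt,
            NoDup P /\ (length P <= n)%nat /\ unit_pairs P = m).

(* Main.v *)
Require Import Defs.
From Stdlib Require Import Reals Lra Lia List ListDec Arith Bool ClassicalEpsilon Classical.
Import ListNotations.
Open Scope R_scope.

Lemma bounded_max (Sp : nat -> Prop) (B : nat) :
  (exists m, Sp m) -> (forall m, Sp m -> (m <= B)%nat) ->
  exists M, Sp M /\ forall m, Sp m -> (m <= M)%nat.
Proof.
  revert Sp. induction B as [|B IH]; intros Sp [m0 Hm0] Hb.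
  - exists m0. split; auto. intros m Hm. pose proof (Hb m Hm). pose proof (Hb m0 Hm0). lia.
  - destruct (classic (Sp (S B))) as [HS|HS].
    + exists (S B). split; auto.
    + apply IH; [exists m0; auto|]. intros m Hm. pose proof (Hb m Hm).
      destruct (Nat.eq_dec m (S B)); [subst; contradiction|lia].
Qed.

Lemma maxnat_spec (Sp : nat -> Prop) (B : nat) :
  (exists m, Sp m) -> (forall m, Sp m -> (m <= B)%nat) ->
  Sp (maxnat Sp) /\ forall m, Sp m -> (m <= maxnat Sp)%nat.
Proof.
  intros H1 H2. unfold maxnat. apply epsilon_spec. apply (bounded_max Sp B H1 H2).
Qed.

Lemma tuples_length (P : nat -> list pt) m :
  length (tuples P m) = fold_left (fun acc i => acc * length (P i))%nat (seq 1 m) (length (P O)).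
Abort.

Lemma tuples_len_le (P : nat -> list pt) (n m : nat) :
  (forall i, (i <= m)%nat -> (length (P i) <= n)%nat) ->
  (length (tuples P m) <= n ^ (S m))%nat.
Proof.
  induction m as [|m IH]; intros H; simpl.
  - rewrite length_map. specialize (H O (le_n _)). simpl. lia.
  - rewrite (flat_map_constant_length (c := length (P (S m)))).
    + specialize (IH (fun i Hi => H i ltac:(lia))). specialize (H (S m) (le_n _)).
      simpl in IH. simpl. rewrite Nat.mul_comm. apply Nat.mul_le_mono; lia.
    + intros; apply length_map.
Qed.

Lemma in_tuples (P : nat -> list pt) (m : nat) (t : list pt) :
  length t = S m -> (forall i, (i <= m)%nat -> In (nth i t (0,0)) (P i)) ->
  In t (tuples P m).
Proof.
  revert t. induction m as [|m IH]; intros t Hl Hin.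
  - destruct t as [|a [|b t]]; simpl in Hl; try lia. simpl.
    apply (in_map (fun p : pt => [p])). apply (Hin O (le_n _)).
  - destruct (exists_last (l:=t)) as [t' [a Ht]]. { intro; subst; simpl in Hl; lia. }
    subst t. rewrite length_app in Hl. simpl in Hl.
    simpl. apply in_flat_map. exists t'. split.
    + apply IH; [lia|]. intros i Hi. specialize (Hin i ltac:(lia)).
      rewrite app_nth1 in Hin by lia. exact Hin.
    + apply (in_map (fun p : pt => t' ++ [p])). specialize (Hin (S m) (le_n _)). rewrite app_nth2 in Hin by lia.
      replace (S m - length t')%nat with O in Hin by lia. exact Hin.
Qed.

Fixpoint chain_ok (delta : nat -> R) (off : nat) (l : list pt) : Prop :=
  match l with
  | a :: ((b :: _) as l') => Defs.dist a b = delta off /\ chain_ok delta (S off) l'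
  | _ => True
  end.

Lemma chain_ok_nth delta off l : chain_ok delta off l ->
  forall i, (S i < length l)%nat -> Defs.dist (nth i l (0,0)) (nth (S i) l (0,0)) = delta (off + i)%nat.
Proof.
  revert off. induction l as [|a l IH]; intros off H i Hi; simpl in Hi; [lia|].
  destruct l as [|b l]; simpl in Hi; [lia|].
  destruct H as [H1 H2]. destruct i as [|i].
  - simpl. rewrite Nat.add_0_r. exact H1.
  - specialize (IH (S off) H2 i ltac:(simpl; lia)). change (Defs.dist (nth i (b :: l) (0,0)) (nth (S i) (b :: l) (0,0)) = delta (off + S i)%nat). rewrite IH. f_equal. lia.
Qed.

Lemma distb_true p q d : Defs.dist p q = d -> distb p q d = true.
Proof. intros H. unfold distb. destruct (Req_EM_T (Defs.dist p q) d); auto. Qed.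

Lemma valid_of delta k t : length t = S k -> chain_ok delta 0 t -> NoDup t -> valid_tuple k delta t = true.
Proof.
  intros Hl Hc Hn. unfold valid_tuple. apply andb_true_intro. split.
  - apply forallb_forall. intros i Hi. apply in_seq in Hi. apply distb_true.
    rewrite (chain_ok_nth delta 0 t Hc i) by lia. reflexivity.
  - destruct (NoDup_dec pt_eq_dec t); auto.
Qed.

Fixpoint sorted_x (l : list pt) : Prop :=
  match l with
  | a :: ((b :: _) as l') => fst a < fst b /\ sorted_x l'
  | _ => True
  end.

Lemma sorted_x_lt a l : sorted_x (a :: l) -> forall y, In y l -> fst a < fst y.
Proof.
  revert a. induction l as [|b l IH]; intros a H y Hy; [destruct Hy|].
  destruct H as [H1 H2]. destruct Hy as [<-|Hy]; auto.
  specialize (IH b H2 y Hy). lra.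
Qed.

Lemma sorted_x_nodup l : sorted_x l -> NoDup l.
Proof.
  induction l as [|a l IH]; intros H; constructor.
  - intro Hin. pose proof (sorted_x_lt a l H a Hin). lra.
  - apply IH. destruct l; simpl in *; tauto.
Qed.

Lemma count_ge (k : nat) (delta : nat -> R) (P : nat -> list pt) (Sl : list (list pt)) :
  NoDup Sl -> (forall t, In t Sl -> In t (tuples P k) /\ valid_tuple k delta t = true) ->
  (length Sl <= Ck_count k delta P)%nat.
Proof.
  intros Hn H. unfold Ck_count. apply NoDup_incl_length; auto.
  intros t Ht. apply filter_In. apply H; auto.
Qed.

Lemma Ck_max_ge (k : nat) (delta : nat -> R) (n : nat) (P : nat -> list pt) :
  (forall i, (i <= k)%nat -> NoDup (P i) /\ (length (P i) <= n)%nat) ->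
  (Ck_count k delta P <= Ck_max k delta n)%nat.
Proof.
  intros HP. unfold Ck_max.
  destruct (maxnat_spec (fun m => exists P : nat -> list pt,
            (forall i, (i <= k)%nat -> NoDup (P i) /\ (length (P i) <= n)%nat)
            /\ Ck_count k delta P = m) (n ^ S k)) as [_ H2].
  - exists (Ck_count k delta P); eauto.
  - intros m [P' [H1 <-]]. unfold Ck_count. eapply Nat.le_trans; [apply filter_length_le|].
    apply tuples_len_le. intros i Hi; apply H1; auto.
  - apply H2. eauto.
Qed.

Lemma Forall2_nth_In (t : list pt) (Cs : list (list pt)) : Forall2 (@In pt) t Cs ->
  forall i, (i < length t)%nat -> In (nth i t (0,0)) (nth i Cs []).
Proof.
  induction 1; intros i Hi; simpl in Hi; [lia|]. destruct i; simpl; auto. apply IHForall2. lia.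
Qed.

Lemma Forall2_length' {A B} (Rl : A -> B -> Prop) l1 l2 : Forall2 Rl l1 l2 -> length l1 = length l2.
Proof. induction 1; simpl; auto. Qed.

Definition Pof (Cs : list (list pt)) (i : nat) : list pt := nodup pt_eq_dec (nth i Cs []).

Lemma Pof_ok (Cs : list (list pt)) n : Forall (fun L => (length L <= n)%nat) Cs ->
  forall i, NoDup (Pof Cs i) /\ (length (Pof Cs i) <= n)%nat.
Proof.
  intros HF i. unfold Pof. split; [apply NoDup_nodup|].
  eapply Nat.le_trans; [apply NoDup_incl_length; [apply NoDup_nodup| intros x Hx; apply nodup_In in Hx; exact Hx]|].
  destruct (Nat.lt_ge_cases i (length Cs)).
  - rewrite Forall_forall in HF. apply HF. apply nth_In; auto.
  - rewrite nth_overflow by auto. simpl. lia.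
Qed.

Lemma in_tuples_Pof (Cs : list (list pt)) k t : length t = S k -> Forall2 (@In pt) t Cs ->
  In t (tuples (Pof Cs) k).
Proof.
  intros Hl HF. apply in_tuples; auto. intros i Hi. unfold Pof. apply nodup_In.
  apply Forall2_nth_In; auto. lia.
Qed.

Lemma NoDup_map_inj {A B} (f : A -> B) (l : list A) : NoDup l ->
  (forall x y, In x l -> In y l -> f x = f y -> x = y) -> NoDup (map f l).
Proof.
  induction l as [|a l IH]; intros Hn Hi; simpl; constructor.
  - intros Hin. apply in_map_iff in Hin. destruct Hin as [y [Hy Hy']].
    inversion Hn; subst. assert (y = a) by (apply Hi; simpl; auto). subst. contradiction.
  - inversion Hn; subst. apply IH; auto. intros; apply Hi; simpl; auto.
Qed.

Lemma NoDup_prod {A B} (l : list A) (l' : list B) : NoDup l -> NoDup l' -> NoDup (list_prod l l').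
Proof.
  induction l as [|a l IH]; intros H1 H2; simpl; [constructor|].
  inversion H1; subst. apply NoDup_app.
  - apply NoDup_map_inj; auto. intros x y _ _ H; inversion H; auto.
  - apply IH; auto.
  - intros [x y] Hx Hy. apply in_map_iff in Hx. destruct Hx as [z [Hz _]]. inversion Hz; subst.
    apply in_prod_iff in Hy. tauto.
Qed.

Fixpoint alll (L n : nat) : list (list nat) :=
  match L with
  | O => [[]]
  | S L' => map (fun p => fst p :: snd p) (list_prod (seq 0 n) (alll L' n))
  end.

Lemma alll_length L n : length (alll L n) = (n ^ L)%nat.
Proof. induction L; simpl; auto. rewrite length_map, length_prod, length_seq, IHL. lia. Qed.

Lemma alll_nodup L n : NoDup (alll L n).
Proof.
  induction L; simpl. { constructor; [simpl; tauto|constructor]. }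
  apply NoDup_map_inj. { apply NoDup_prod; auto. apply seq_NoDup. }
  intros [a b] [c d] _ _ H. simpl in H. inversion H; subst; auto.
Qed.

Lemma alll_in L n js : In js (alll L n) -> length js = L /\ Forall (fun j => (j < n)%nat) js.
Proof.
  revert js. induction L; simpl; intros js H.
  - destruct H as [<-|[]]. auto.
  - apply in_map_iff in H. destruct H as [[a b] [<- H]]. apply in_prod_iff in H.
    destruct H as [H1 H2]. apply in_seq in H1. apply IHL in H2. simpl. split; [lia|]. constructor; [lia|tauto].
Qed.
Lemma dist_eq p q d : 0 <= d -> (fst p - fst q)^2 + (snd p - snd q)^2 = d^2 -> Defs.dist p q = d.
Proof. intros H1 H2. unfold Defs.dist. rewrite H2. apply sqrt_pow2; auto. Qed.

Lemma dist_sym p q : Defs.dist p q = Defs.dist q p.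
Proof. unfold Defs.dist. f_equal. ring. Qed.

Lemma dist_sq p q : (Defs.dist p q)^2 = (fst p - fst q)^2 + (snd p - snd q)^2.
Proof. unfold Defs.dist. rewrite <- Rsqr_pow2. apply Rsqr_sqrt. apply Rplus_le_le_0_compat; apply pow2_ge_0. Qed.

Lemma dist_coord p q d : Defs.dist p q = d -> Rabs (fst p - fst q) <= d /\ Rabs (snd p - snd q) <= d.
Proof.
  intros H. pose proof (dist_sq p q) as Hs. rewrite H in Hs.
  assert (0 <= d) by (rewrite <- H; unfold Defs.dist; apply sqrt_pos).
  pose proof (pow2_ge_0 (fst p - fst q)). pose proof (pow2_ge_0 (snd p - snd q)).
  split; apply Rabs_le; split; nra.
Qed.

Definition spk (a t : R) (X : pt) : pt :=
  (fst X + a*(1-t^2)/(1+t^2), snd X + a*(2*t)/(1+t^2)).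
Definition spkl (a t : R) (X : pt) : pt :=
  (fst X - a*(1-t^2)/(1+t^2), snd X - a*(2*t)/(1+t^2)).

Lemma spk_dist a t X : 0 <= a -> Defs.dist X (spk a t X) = a.
Proof.
  intros Ha. apply dist_eq; auto. unfold spk; cbn [fst snd].
  assert (1 + t^2 <> 0) by (pose proof (pow2_ge_0 t); lra). field; auto.
Qed.

Lemma spkl_dist a t X : 0 <= a -> Defs.dist (spkl a t X) X = a.
Proof.
  intros Ha. apply dist_eq; auto. unfold spkl; cbn [fst snd].
  assert (1 + t^2 <> 0) by (pose proof (pow2_ge_0 t); lra). field; auto.
Qed.

Lemma spk_x a t X : 0 < a -> 0 <= t < 1 -> fst X < fst (spk a t X).
Proof.
  intros Ha Ht. unfold spk; cbn [fst snd]. assert (0 < a*(1-t^2)/(1+t^2)).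
  { assert (t^2 < 1) by (replace (t^2) with (t*t) by ring; nra). apply Rdiv_lt_0_compat; [apply Rmult_lt_0_compat; lra|]. pose proof (pow2_ge_0 t); lra. } lra.
Qed.

Lemma spkl_x a t X : 0 < a -> 0 <= t < 1 -> fst (spkl a t X) < fst X.
Proof.
  intros Ha Ht. unfold spkl; cbn [fst snd]. assert (0 < a*(1-t^2)/(1+t^2)).
  { assert (t^2 < 1) by (replace (t^2) with (t*t) by ring; nra). apply Rdiv_lt_0_compat; [apply Rmult_lt_0_compat; lra|]. pose proof (pow2_ge_0 t); lra. } lra.
Qed.

Lemma div_le x y z : 0 < y -> x <= z*y -> x/y <= z.
Proof. intros Hy H. apply Rmult_le_reg_r with y; auto. unfold Rdiv. rewrite Rmult_assoc, Rinv_l by lra. lra. Qed.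

Lemma spk_box a t X : 0 < a -> 0 <= t <= 1 ->
  Rabs (fst (spk a t X) - (fst X + a)) <= 2*a*t /\ Rabs (snd (spk a t X) - snd X) <= 2*a*t.
Proof.
  intros Ha Ht. unfold spk; cbn [fst snd]. assert (H1 : 1 <= 1 + t^2) by nra.
  split.
  - replace (fst X + a * (1 - t ^ 2) / (1 + t ^ 2) - (fst X + a)) with (- (2*a*t^2/(1+t^2)))
      by (field; nra).
    rewrite Rabs_Ropp. rewrite Rabs_right.
    + apply div_le; [lra|]. assert (t^2 <= t) by (replace (t^2) with (t*t) by ring; nra).
      assert (0 <= 2*a*t*t^2) by (pose proof (pow2_ge_0 t); apply Rmult_le_pos; nra). nra.
    + apply Rle_ge. apply Rmult_le_pos; [pose proof (pow2_ge_0 t); nra|apply Rlt_le, Rinv_0_lt_compat; lra].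
  - replace (snd X + a * (2 * t) / (1 + t ^ 2) - snd X) with (2*a*t/(1+t^2)) by (field; nra).
    rewrite Rabs_right.
    + apply div_le; [lra|].
      assert (0 <= 2*a*t*t^2) by (pose proof (pow2_ge_0 t); apply Rmult_le_pos; nra). nra.
    + apply Rle_ge. apply Rmult_le_pos; [nra|apply Rlt_le, Rinv_0_lt_compat; lra].
Qed.

Lemma spk_inj a t t' X : 0 < a -> 0 <= t < 1 -> 0 <= t' < 1 -> spk a t X = spk a t' X -> t = t'.
Proof.
  intros Ha Ht Ht' H. unfold spk in H.
  assert (H2 := f_equal snd H). cbn [snd] in H2.
  assert (a * (2 * t) / (1 + t ^ 2) = a * (2 * t') / (1 + t' ^ 2)) by lra.
  assert (a * (2 * t) * (1 + t' ^ 2) = a * (2 * t') * (1 + t ^ 2)).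
  { pose proof (pow2_ge_0 t). pose proof (pow2_ge_0 t').
    replace (a*(2*t)) with (a*(2*t)/(1+t^2) * (1+t^2)) by (field; lra).
    replace (a*(2*t')) with (a*(2*t')/(1+t'^2) * (1+t'^2)) by (field; lra).
    rewrite H0. ring. }
  assert ((t - t') * (1 - t*t') = 0) by nra.
  apply Rmult_integral in H3. destruct H3; nra.
Qed.

Lemma spkl_inj a t t' X : 0 < a -> 0 <= t < 1 -> 0 <= t' < 1 -> spkl a t X = spkl a t' X -> t = t'.
Proof.
  intros Ha Ht Ht' H. apply (spk_inj a t t' X); auto. unfold spkl, spk in *.
  assert (H1 := f_equal fst H). assert (H2 := f_equal snd H). cbn [fst snd] in H1, H2.
  f_equal; lra.
Qed.

Definition sqbc (b c : R) : R := sqrt (b^2 + c^2).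

Definition bridge (b c : R) (z p : pt) : pt :=
  let s := sqbc b c in
  let u := fst p - fst z in let v := snd p - snd z in
  let dx := s - u in let dy := - v in
  let D2 := dx^2 + dy^2 in let w := D2 - s^2 in
  let al := (2*b^2 + w)/(2*D2) in
  let be := sqrt (4*b^2*c^2 - w^2)/(2*D2) in
  (fst p + al*dx - be*dy, snd p + al*dy + be*dx).

Definition rho (b c : R) : R :=
  let s := sqbc b c in
  Rmin 1 (Rmin (s/2) (Rmin (b^2/(4*(2*s+2))) (Rmin (c^2/(4*(2*s+2)))
     (Rmin (b*s/(4*c)) (c*s/(4*b)))))).

Lemma sqbc_pos b c : 0 < b -> 0 < sqbc b c.
Proof. intros. unfold sqbc. apply sqrt_lt_R0. pose proof (pow2_ge_0 c). nra. Qed.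

Lemma sqbc_sq b c : (sqbc b c)^2 = b^2 + c^2.
Proof. unfold sqbc. rewrite <- Rsqr_pow2. apply Rsqr_sqrt. pose proof (pow2_ge_0 c). pose proof (pow2_ge_0 b). lra. Qed.

Lemma rho_pos b c : 0 < b -> 0 < c -> 0 < rho b c.
Proof.
  intros Hb Hc. pose proof (sqbc_pos b c Hb). unfold rho.
  repeat apply Rmin_glb_lt; try lra.
  all: apply Rdiv_lt_0_compat; nra.
Qed.

Lemma Rabs_le_inv x y : Rabs x <= y -> -y <= x <= y.
Proof. unfold Rabs; destruct (Rcase_abs x); lra. Qed.

Lemma bridge_alg (b c s u v r rh : R) :
  0 < b -> 0 < c -> 0 < s -> s^2 = b^2 + c^2 ->
  Rabs u <= rh -> Rabs v <= rh -> rh <= 1 -> rh <= s/2 ->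
  rh * (4*(2*s+2)) <= b^2 -> rh * (4*(2*s+2)) <= c^2 -> rh*(4*c) <= b*s -> rh*(4*b) <= c*s ->
  let dx := s - u in let dy := - v in
  let D2 := dx^2 + dy^2 in let w := D2 - s^2 in
  r = sqrt (4*b^2*c^2 - w^2) ->
  let al := (2*b^2 + w)/(2*D2) in
  let be := r/(2*D2) in
  (al*dx - be*dy)^2 + (al*dy + be*dx)^2 = b^2 /\
  (dx - (al*dx - be*dy))^2 + (dy - (al*dy + be*dx))^2 = c^2 /\
  0 < al*dx - be*dy /\ 0 < dx - (al*dx - be*dy).
Proof.
  intros Hb Hc Hs Hs2 Hu Hv H1 H2 H3 H4 H5 H6 dx dy D2 w Hrr al be.
  apply Rabs_le_inv in Hu. apply Rabs_le_inv in Hv.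
  assert (Hrh : 0 <= rh) by (pose proof (Rabs_pos u); lra).
  assert (Hw : w = -2*s*u + u^2 + v^2) by (unfold w, D2, dx, dy; ring).
  assert (Hwb : Rabs w <= 2*s*rh + 2*rh^2).
  { rewrite Hw. apply Rabs_le. split; nra. }
  assert (HW1 : 2*s*rh + 2*rh^2 <= b^2/4) by nra.
  assert (HW2 : 2*s*rh + 2*rh^2 <= c^2/4) by nra.
  apply Rabs_le_inv in Hwb.
  assert (Hr : 0 <= r) by (rewrite Hrr; apply sqrt_pos).
  assert (Hr2 : r*r = 4*b^2*c^2 - w^2).
  { rewrite Hrr. apply sqrt_sqrt.
    assert (w^2 <= (b^2/4)*(c^2/4)).
    { rewrite <- pow2_abs.
      assert (Rabs w <= b^2/4) by (apply Rabs_le; lra). assert (Rabs w <= c^2/4) by (apply Rabs_le; lra).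
      pose proof (Rabs_pos w). replace (Rabs w ^ 2) with (Rabs w * Rabs w) by ring.
      apply Rmult_le_compat; auto. }
    nra. }
  assert (HD2 : D2 = s^2 + w) by (unfold w; ring).
  assert (HD2p : 0 < D2) by nra.
  assert (Hr2b : r <= 2*b*c).
  { pose proof (pow2_ge_0 w). assert (r*r <= (2*b*c)*(2*b*c)) by nra.
    destruct (Rle_dec r (2*b*c)); auto. assert (0 < 2*b*c) by nra. nra. }
  assert (Hal : al * (2*D2) = 2*b^2 + w) by (unfold al; field; lra).
  assert (Hbe : be * (2*D2) = r) by (unfold be; field; lra).
  assert (E1 : (al*dx - be*dy)^2 + (al*dy + be*dx)^2 = (al^2 + be^2) * D2) by (unfold D2; ring).
  assert (E2 : (dx - (al*dx - be*dy))^2 + (dy - (al*dy + be*dx))^2 = ((1-al)^2 + be^2) * D2) by (unfold D2; ring).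
  assert (Kal : al = (2*b^2+w)/(2*D2)) by reflexivity.
  assert (Kbe : be = r/(2*D2)) by reflexivity.
  split; [|split; [|split]].
  - rewrite E1, Kal, Kbe. apply Rmult_eq_reg_r with (4*D2); [|lra].
    field_simplify; [|lra]. rewrite HD2. nra.
  - rewrite E2, Kal, Kbe. apply Rmult_eq_reg_r with (4*D2); [|lra].
    field_simplify; [|lra]. rewrite HD2. nra.
  - apply Rmult_lt_reg_r with (2*D2); [lra|]. rewrite Rmult_0_l.
    replace ((al * dx - be * dy) * (2 * D2)) with ((al*(2*D2))*dx - (be*(2*D2))*dy) by ring.
    rewrite Hal, Hbe. unfold dx, dy.
    assert (0 < (2*b^2 + w)*(s-u) - 2*b*c*rh).
    { assert (A1 : 7*b^2/4 <= 2*b^2 + w) by lra. assert (A2 : s/2 <= s - u) by lra.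
      assert (A3 : 7*b^2/4 * (s/2) <= (2*b^2+w)*(s-u)).
      { apply Rmult_le_compat; pose proof (pow2_ge_0 b); lra. }
      assert (A4 : 2*b*c*rh <= b^2*s/2) by nra.
      assert (0 < b^2 * s) by (apply Rmult_lt_0_compat; [apply pow_lt|]; lra). lra. }
    assert (r * v >= - (2*b*c*rh)) by nra. nra.
  - apply Rmult_lt_reg_r with (2*D2); [lra|]. rewrite Rmult_0_l.
    replace ((dx - (al * dx - be * dy)) * (2 * D2)) with (dx*(2*D2) - (al*(2*D2))*dx + (be*(2*D2))*dy) by ring.
    rewrite Hal, Hbe. unfold dx, dy. rewrite HD2.
    assert (0 < (2*c^2 + w)*(s-u) - 2*b*c*rh).
    { assert (A1 : 7*c^2/4 <= 2*c^2 + w) by lra. assert (A2 : s/2 <= s - u) by lra.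
      assert (A3 : 7*c^2/4 * (s/2) <= (2*c^2+w)*(s-u)).
      { apply Rmult_le_compat; pose proof (pow2_ge_0 c); lra. }
      assert (A4 : 2*b*c*rh <= c^2*s/2) by nra.
      assert (0 < c^2 * s) by (apply Rmult_lt_0_compat; [apply pow_lt|]; lra). lra. }
    assert (r * v <= 2*b*c*rh) by nra. nra.
Qed.

Lemma le_div_mul x y z : 0 < z -> x <= y/z -> x*z <= y.
Proof. intros Hz H. apply Rmult_le_compat_r with (r:=z) in H; [|lra]. unfold Rdiv in H. rewrite Rmult_assoc, Rinv_l in H by lra. lra. Qed.

Lemma bridge_ok b c z p : 0 < b -> 0 < c ->
  Rabs (fst p - fst z) <= rho b c -> Rabs (snd p - snd z) <= rho b c ->
  Defs.dist p (bridge b c z p) = b /\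
  Defs.dist (bridge b c z p) (fst z + sqbc b c, snd z) = c /\
  fst p < fst (bridge b c z p) /\ fst (bridge b c z p) < fst z + sqbc b c.
Proof.
  intros Hb Hc Hu Hv.
  pose proof (sqbc_pos b c Hb) as Hs. pose proof (sqbc_sq b c) as Hs2.
  assert (R1 : rho b c <= 1) by (unfold rho; apply Rmin_l).
  assert (R2 : rho b c <= sqbc b c / 2) by (unfold rho; eapply Rle_trans; [apply Rmin_r|]; apply Rmin_l).
  assert (R3 : rho b c <= b^2/(4*(2*sqbc b c+2))) by (unfold rho; do 2 (eapply Rle_trans; [apply Rmin_r|]); apply Rmin_l).
  assert (R4 : rho b c <= c^2/(4*(2*sqbc b c+2))) by (unfold rho; do 3 (eapply Rle_trans; [apply Rmin_r|]); apply Rmin_l).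
  assert (R5 : rho b c <= b*sqbc b c/(4*c)) by (unfold rho; do 4 (eapply Rle_trans; [apply Rmin_r|]); apply Rmin_l).
  assert (R6 : rho b c <= c*sqbc b c/(4*b)) by (unfold rho; do 5 (eapply Rle_trans; [apply Rmin_r|]); apply Rle_refl).
  apply le_div_mul in R3; [|lra]. apply le_div_mul in R4; [|lra].
  apply le_div_mul in R5; [|lra]. apply le_div_mul in R6; [|lra].
  destruct (bridge_alg b c (sqbc b c) (fst p - fst z) (snd p - snd z)
     (sqrt (4*b^2*c^2 - (((sqbc b c - (fst p - fst z))^2 + (- (snd p - snd z))^2) - (sqbc b c)^2)^2))
     (rho b c) Hb Hc Hs Hs2 Hu Hv R1 R2 R3 R4 R5 R6 eq_refl) as [E1 [E2 [E3 E4]]].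
  unfold bridge. cbn zeta. cbn [fst snd].
  set (s := sqbc b c) in *.
  set (dx := s - (fst p - fst z)) in *.
  set (dy := - (snd p - snd z)) in *.
  set (D2 := dx^2 + dy^2) in *.
  set (w := D2 - s^2) in *.
  set (al := (2*b^2 + w)/(2*D2)) in *.
  set (be := sqrt (4*b^2*c^2 - w^2)/(2*D2)) in *.
  split; [|split; [|split]].
  - apply dist_eq; [lra|]. cbn [fst snd]. rewrite <- E1. ring.
  - apply dist_eq; [lra|]. cbn [fst snd]. rewrite <- E2. unfold dx, dy. ring.
  - lra.
  - assert (dx = s - (fst p - fst z)) by reflexivity. lra.
Qed.
Definition tau (a r : R) : R := Rmin (1/2) (r/(2*a)).
Definition tj (ta : R) (j : nat) : R := ta / (INR j + 1).

Lemma tj_range ta j : 0 < ta -> ta <= 1/2 -> 0 <= tj ta j <= ta.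
Proof.
  intros H1 H2. unfold tj. pose proof (pos_INR j). split.
  - apply Rlt_le, Rdiv_lt_0_compat; lra.
  - apply div_le; [lra|]. nra.
Qed.

Lemma tj_inj ta j j' : 0 < ta -> tj ta j = tj ta j' -> j = j'.
Proof.
  intros H E. unfold tj in E. pose proof (pos_INR j). pose proof (pos_INR j').
  assert (INR j + 1 = INR j' + 1).
  { apply (f_equal Rinv) in E. rewrite !Rinv_div in E.
    apply Rmult_eq_reg_r with (/ ta); [|apply Rinv_neq_0_compat; lra].
    unfold Rdiv in E. exact E. }
  apply INR_eq. lra.
Qed.

Lemma tau_pos a r : 0 < a -> 0 < r -> 0 < tau a r.
Proof. intros. unfold tau. apply Rmin_glb_lt; [lra|]. apply Rdiv_lt_0_compat; lra. Qed.

Lemma tau_le a r : tau a r <= 1/2.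
Proof. apply Rmin_l. Qed.

Lemma tau_box a r : 0 < a -> 2*a*tau a r <= r.
Proof.
  intros Ha. unfold tau. assert (Rmin (1/2) (r/(2*a)) <= r/(2*a)) by apply Rmin_r.
  apply le_div_mul in H; [|lra]. lra.
Qed.

Section Body.
Variable d : nat -> R.
Hypothesis dpos : forall i, 0 < d i.

Definition runp (off : nat) (X : pt) (j : nat) : pt :=
  spk (d off) (tj (tau (d off) (rho (d (S off)) (d (S (S off))))) j) X.
Definition runq (off : nat) (X : pt) (j : nat) : pt :=
  bridge (d (S off)) (d (S (S off))) (fst X + d off, snd X) (runp off X j).
Definition nexthub (off : nat) (X : pt) : pt :=
  (fst X + d off + sqbc (d (S off)) (d (S (S off))), snd X).
Definition sufp (off : nat) (X : pt) (j : nat) : pt := spk (d off) (tj (1/2) j) X.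
Definition suft (off : nat) (X : pt) (j : nat) : pt := (fst (sufp off X j) + d (S off), snd (sufp off X j)).

Definition suf (tr : bool) (off : nat) (X : pt) (j : nat) : list pt :=
  if tr then [sufp off X j; suft off X j] else [sufp off X j].
Definition sufC (tr : bool) (off : nat) (X : pt) (n : nat) : list (list pt) :=
  if tr then [map (sufp off X) (seq 0 n); map (suft off X) (seq 0 n)] else [map (sufp off X) (seq 0 n)].

Fixpoint body (tr : bool) (RR : nat) (off : nat) (X : pt) (js : list nat) : list pt :=
  match RR with
  | O => X :: suf tr off X (hd O js)
  | S R' => X :: runp off X (hd O js) :: runq off X (hd O js) :: body tr R' (S (S (S off))) (nexthub off X) (tl js)
  end.

Fixpoint bodyC (tr : bool) (RR : nat) (off : nat) (X : pt) (n : nat) : list (list pt) :=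
  match RR with
  | O => [X] :: sufC tr off X n
  | S R' => [X] :: map (runp off X) (seq 0 n) :: map (runq off X) (seq 0 n) :: bodyC tr R' (S (S (S off))) (nexthub off X) n
  end.

Lemma runp_q_ok off X j :
  Defs.dist X (runp off X j) = d off /\ Defs.dist (runp off X j) (runq off X j) = d (S off) /\
  Defs.dist (runq off X j) (nexthub off X) = d (S (S off)) /\
  fst X < fst (runp off X j) /\ fst (runp off X j) < fst (runq off X j) /\ fst (runq off X j) < fst (nexthub off X).
Proof.
  pose proof (dpos off) as Ha. pose proof (dpos (S off)) as Hb. pose proof (dpos (S (S off))) as Hc.
  set (a := d off) in *. set (b := d (S off)) in *. set (c := d (S (S off))) in *.
  pose proof (rho_pos b c Hb Hc) as Hr.
  pose proof (tau_pos a (rho b c) Ha Hr) as Ht. pose proof (tau_le a (rho b c)) as Ht2.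
  pose proof (tj_range _ j Ht Ht2) as Htj.
  pose proof (tau_box a (rho b c) Ha) as Hbox.
  destruct (spk_box a (tj (tau a (rho b c)) j) X Ha ltac:(lra)) as [B1 B2].
  assert (B1' : Rabs (fst (runp off X j) - fst (fst X + a, snd X)) <= rho b c).
  { unfold runp. fold a b c. cbn [fst]. nra. }
  assert (B2' : Rabs (snd (runp off X j) - snd (fst X + a, snd X)) <= rho b c).
  { unfold runp. fold a b c. cbn [snd]. nra. }
  destruct (bridge_ok b c (fst X + a, snd X) (runp off X j) Hb Hc B1' B2') as [D1 [D2 [D3 D4]]].
  unfold runq, nexthub. fold a b c. cbn [fst snd] in *.
  split; [|split; [|split; [|split; [|split]]]]; auto.
  - unfold runp. fold a b c. apply spk_dist; lra.
  - unfold runp. fold a b c. apply spk_x; lra.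
Qed.

Lemma body_len tr RR off X js : length (body tr RR off X js) = (3*RR + 1 + (if tr then 2 else 1))%nat.
Proof.
  revert off X js. induction RR as [|RR IHRR]; intros; simpl.
  - destruct tr; simpl; lia.
  - rewrite IHRR. lia.
Qed.

Lemma body_hd tr RR off X js : exists rest, body tr RR off X js = X :: rest.
Proof. destruct RR; simpl; eauto. Qed.

Lemma suf_ok tr off X j : chain_ok d off (X :: suf tr off X j) /\ sorted_x (X :: suf tr off X j).
Proof.
  pose proof (dpos off). pose proof (dpos (S off)).
  assert (Ht : 0 <= tj (1/2) j < 1) by (pose proof (tj_range (1/2) j ltac:(lra) ltac:(lra)); lra).
  assert (E1 : Defs.dist X (sufp off X j) = d off) by (apply spk_dist; lra).
  assert (E2 : fst X < fst (sufp off X j)) by (apply spk_x; lra).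
  destruct tr; simpl; repeat split; auto.
  - apply dist_eq; [lra|]. unfold suft; cbn [fst snd]. ring.
  - unfold suft; cbn [fst]. lra.
Qed.

Lemma body_ok tr RR off X js : chain_ok d off (body tr RR off X js) /\ sorted_x (body tr RR off X js).
Proof.
  revert off X js. induction RR as [|RR IHRR]; intros off X js.
  - apply suf_ok.
  - simpl. destruct (IHRR (S (S (S off))) (nexthub off X) (tl js)) as [H1 H2].
    destruct (body_hd tr RR (S (S (S off))) (nexthub off X) (tl js)) as [rest Hr].
    destruct (runp_q_ok off X (hd O js)) as [D1 [D2 [D3 [D4 [D5 D6]]]]].
    rewrite Hr in *. simpl. repeat split; auto.
Qed.

Lemma body_inj tr RR off X js js' : length js = S RR -> length js' = S RR ->
  body tr RR off X js = body tr RR off X js' -> js = js'.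
Proof.
  revert off X js js'. induction RR as [|RR IHRR]; intros off X js js' L1 L2 E.
  - destruct js as [|j [|]]; destruct js' as [|j' [|]]; simpl in *; try lia.
    assert (E' : sufp off X j = sufp off X j') by (destruct tr; exact (f_equal (fun l => nth 1 l (0,0)) E)).
    assert (j = j') as ->; [|reflexivity].
    apply (tj_inj (1/2)); [lra|].
    apply (spk_inj (d off) _ _ X); [apply dpos| | |exact E'].
    + pose proof (tj_range (1/2) j ltac:(lra) ltac:(lra)); lra.
    + pose proof (tj_range (1/2) j' ltac:(lra) ltac:(lra)); lra.
  - destruct js as [|j js]; destruct js' as [|j' js']; simpl in *; try lia.
    assert (E1 : runp off X j = runp off X j') by exact (f_equal (fun l => nth 1 l (0,0)) E).
    assert (E3 : body tr RR (S (S (S off))) (nexthub off X) js = body tr RR (S (S (S off))) (nexthub off X) js')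
      by exact (f_equal (fun l => skipn 3 l) E).
    assert (j = j') as ->.
    { pose proof (dpos off). pose proof (dpos (S off)). pose proof (dpos (S (S off))).
      pose proof (rho_pos _ _ (dpos (S off)) (dpos (S (S off)))).
      pose proof (tau_pos (d off) _ (dpos off) H2) as Ht. pose proof (tau_le (d off) (rho (d (S off)) (d (S (S off))))).
      apply (tj_inj _ _ _ Ht). apply (spk_inj (d off) _ _ X); auto.
      - pose proof (tj_range _ j Ht H3). lra.
      - pose proof (tj_range _ j' Ht H3). lra. }
    f_equal. eapply IHRR; eauto.
Qed.

Lemma body_C tr RR off X js n : Forall (fun j => (j < n)%nat) js -> length js = S RR ->
  Forall2 (@In pt) (body tr RR off X js) (bodyC tr RR off X n).
Proof.
  revert off X js. induction RR as [|RR IHRR]; intros off X js HF L.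
  - destruct js as [|j js]; simpl in L; [lia|]. inversion HF; subst. simpl.
    constructor; [simpl; auto|].
    destruct tr; simpl; repeat constructor; apply in_map; apply in_seq; lia.
  - destruct js as [|j js]; simpl in L; [lia|]. inversion HF; subst. simpl.
    constructor; [simpl; auto|]. constructor; [apply in_map; apply in_seq; lia|].
    constructor; [apply in_map; apply in_seq; lia|]. apply IHRR; auto.
Qed.

Lemma bodyC_len tr RR off X n : (1 <= n)%nat -> Forall (fun L => (length L <= n)%nat) (bodyC tr RR off X n).
Proof.
  revert off X. induction RR as [|RR IHRR]; intros off X Hn; simpl.
  - constructor; [simpl; lia|]. destruct tr; simpl; repeat constructor; rewrite length_map, length_seq; lia.
  - constructor; [simpl; lia|]. constructor; [rewrite length_map, length_seq; lia|].
    constructor; [rewrite length_map, length_seq; lia|]. auto.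
Qed.

Lemma bodyC_length tr RR off X n : length (bodyC tr RR off X n) = (3*RR + 1 + (if tr then 2 else 1))%nat.
Proof.
  revert off X. induction RR as [|RR IHRR]; intros; simpl.
  - destruct tr; simpl; lia.
  - rewrite IHRR. lia.
Qed.

End Body.

Lemma valid_of' (delta d : nat -> R) k t : length t = S k -> chain_ok d 0 t ->
  (forall i, (i < k)%nat -> d i = delta i) -> NoDup t -> valid_tuple k delta t = true.
Proof.
  intros Hl Hc Hd Hn. unfold valid_tuple. apply andb_true_intro. split.
  - apply forallb_forall. intros i Hi. apply in_seq in Hi. apply distb_true.
    rewrite (chain_ok_nth d 0 t Hc i) by lia. simpl. apply Hd. lia.
  - destruct (NoDup_dec pt_eq_dec t); auto.
Qed.

Definition X0 : pt := (0,0).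

Lemma caseA (delta d : nat -> R) (dpos : forall i, 0 < d i) (tr : bool) (RR k n : nat) :
  k = (3*RR + 1 + (if tr then 2 else 1))%nat -> (1 <= n)%nat ->
  (forall i, (i < k)%nat -> d i = delta i) ->
  (n ^ (RR + 2) <= Ck_max k delta n)%nat.
Proof.
  intros Hk Hn Hd.
  set (pre := fun j => spkl (d O) (tj (1/2) j) X0).
  set (Cs := map pre (seq 0 n) :: bodyC d tr RR 1 X0 n).
  set (F := fun pr : nat * list nat => pre (fst pr) :: body d tr RR 1 X0 (snd pr)).
  set (Sl := map F (list_prod (seq 0 n) (alll (S RR) n))).
  assert (HL : length Sl = (n ^ (RR + 2))%nat).
  { unfold Sl. rewrite length_map, length_prod, length_seq, alll_length.
    replace (RR + 2)%nat with (S (S RR)) by lia. reflexivity. }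
  rewrite <- HL.
  eapply Nat.le_trans; [|apply (Ck_max_ge k delta n (Pof Cs))].
  - apply count_ge.
    + unfold Sl. apply NoDup_map_inj.
      * apply NoDup_prod; [apply seq_NoDup|apply alll_nodup].
      * intros [j js] [j' js'] H1 H2 E. unfold F in E. cbn [fst snd] in E.
        assert (E1 : pre j = pre j') by exact (f_equal (hd X0) E).
        assert (E2 : body d tr RR 1 X0 js = body d tr RR 1 X0 js') by exact (f_equal (@tl pt) E).
        apply in_prod_iff in H1, H2. cbn [fst snd] in *.
        destruct (alll_in _ _ _ (proj2 H1)) as [L1 _]. destruct (alll_in _ _ _ (proj2 H2)) as [L2 _].
        assert (js = js') by (eapply body_inj; eauto). subst js'.
        assert (j = j'); [|subst; reflexivity].
        apply (tj_inj (1/2)); [lra|]. apply (spkl_inj (d O) _ _ X0); [apply dpos| | |exact E1].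
        -- pose proof (tj_range (1/2) j ltac:(lra) ltac:(lra)); lra.
        -- pose proof (tj_range (1/2) j' ltac:(lra) ltac:(lra)); lra.
    + intros t Ht. unfold Sl in Ht. apply in_map_iff in Ht. destruct Ht as [[j js] [<- Hin]].
      apply in_prod_iff in Hin. cbn [fst snd] in Hin. destruct Hin as [Hj Hjs].
      apply in_seq in Hj. destruct (alll_in _ _ _ Hjs) as [L1 HF].
      assert (Hlen : length (F (j, js)) = S k).
      { unfold F; cbn [fst snd length]. rewrite body_len. subst k. lia. }
      destruct (body_ok d dpos tr RR 1 X0 js) as [Hc Hs].
      destruct (body_hd d tr RR 1 X0 js) as [rest Hr].
      pose proof (tj_range (1/2) j ltac:(lra) ltac:(lra)) as Htj.
      split.
      * apply in_tuples_Pof; auto. unfold F, Cs; cbn [fst snd]. constructor.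
        -- apply in_map, in_seq. lia.
        -- apply body_C; auto.
      * apply (valid_of' delta d); auto.
        -- unfold F; cbn [fst snd]. rewrite Hr in *. split; auto.
           unfold pre. apply spkl_dist. apply Rlt_le, dpos.
        -- apply sorted_x_nodup. unfold F; cbn [fst snd]. rewrite Hr in *. split; auto.
           unfold pre. apply spkl_x; [apply dpos|lra].
  - intros i _. apply Pof_ok. unfold Cs. constructor.
    + rewrite length_map, length_seq. lia.
    + apply bodyC_len; auto.
Qed.

From Stdlib Require Import ZArith.

Lemma avoid_list (l : list R) (e0 : R) : 0 < e0 -> exists e, 0 < e <= e0 /\ ~ In e l.
Proof.
  intros He. destruct (classic (exists e, 0 < e <= e0 /\ ~ In e l)) as [H|H]; auto. exfalso.
  set (cands := map (fun i => e0 / (INR i + 1)) (seq 0 (S (length l)))).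
  assert (Hinc : incl cands l).
  { intros x Hx. unfold cands in Hx. apply in_map_iff in Hx. destruct Hx as [i [<- _]].
    destruct (classic (In (e0 / (INR i + 1)) l)) as [Hi|Hi]; auto. exfalso. apply H.
    exists (e0 / (INR i + 1)). split; auto. pose proof (pos_INR i). split.
    - apply Rdiv_lt_0_compat; lra.
    - apply div_le; [lra|]. nra. }
  assert (Hnd : NoDup cands).
  { unfold cands. apply NoDup_map_inj; [apply seq_NoDup|].
    intros i j _ _ E. apply (tj_inj e0); auto. }
  pose proof (NoDup_incl_length Hnd Hinc). unfold cands in H0. rewrite length_map, length_seq in H0. lia.
Qed.

Definition zpeq (a b : Z * Z) : bool := (Z.eqb (fst a) (fst b) && Z.eqb (snd a) (snd b))%bool.

Lemma zpeq_true a b : zpeq a b = true <-> a = b.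
Proof.
  destruct a as [a1 a2], b as [b1 b2]. unfold zpeq; simpl. rewrite andb_true_iff, !Z.eqb_eq.
  split; [intros [-> ->]; auto|intros H; inversion H; auto].
Qed.

Fixpoint pos (c : Z * Z) (l : list (Z * Z)) : nat :=
  match l with
  | [] => O
  | a :: l' => if zpeq a c then O else S (pos c l')
  end.

Lemma pos_lt c l : In c l -> (pos c l < length l)%nat.
Proof.
  induction l as [|a l IH]; intros H; [destruct H|]. simpl.
  destruct (zpeq a c) eqn:E; [lia|]. destruct H as [->|H].
  - assert (zpeq c c = true) by (apply zpeq_true; auto). congruence.
  - specialize (IH H). lia.
Qed.

Lemma pos_inj c c' l : In c l -> In c' l -> pos c l = pos c' l -> c = c'.
Proof.
  induction l as [|a l IH]; intros H H' E; [destruct H|]. simpl in E.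
  destruct (zpeq a c) eqn:E1; destruct (zpeq a c') eqn:E2.
  - apply zpeq_true in E1, E2. congruence.
  - discriminate.
  - discriminate.
  - injection E as E. destruct H as [->|H].
    { assert (zpeq c c = true) by (apply zpeq_true; auto). congruence. }
    destruct H' as [->|H'].
    { assert (zpeq c' c' = true) by (apply zpeq_true; auto). congruence. }
    auto.
Qed.

Lemma filter_filter_le {A} (p q : A -> bool) (l : list A) :
  (length (filter p (filter q l)) <= length (filter p l))%nat.
Proof.
  induction l as [|a l IH]; simpl; auto.
  destruct (q a); simpl; destruct (p a); simpl; lia.
Qed.

Lemma pig_sum {A} (f : A -> Z * Z) (CL : list (Z * Z)) (l : list A) :
  (forall a, In a l -> In (f a) CL) ->
  (length l <= list_sum (map (fun c => length (filter (fun a => zpeq (f a) c) l)) CL))%nat.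
Proof.
  revert l. induction CL as [|c CL IH]; intros l H.
  - destruct l as [|a l]; simpl; [lia|]. specialize (H a (or_introl eq_refl)). destruct H.
  - simpl. pose proof (filter_length (fun a => zpeq (f a) c) l) as Hfl.
    assert (H2 : (length (filter (fun x => negb (zpeq (f x) c)) l) <=
             list_sum (map (fun c0 => length (filter (fun a => zpeq (f a) c0) l)) CL))%nat).
    { eapply Nat.le_trans; [apply IH|].
      - intros a Ha. apply filter_In in Ha. destruct Ha as [Ha Hn].
        destruct (H a Ha) as [E|E]; auto. subst c.
        assert (zpeq (f a) (f a) = true) by (apply zpeq_true; auto). rewrite H0 in Hn; discriminate.
      - clear. induction CL as [|c' CL IH]; simpl; [lia|].
        apply Nat.add_le_mono; auto.
        apply filter_filter_le. }
    lia.
Qed.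

Lemma sum_le_max {B} (g : B -> nat) (CL : list B) : CL <> [] ->
  exists c, In c CL /\ (list_sum (map g CL) <= length CL * g c)%nat.
Proof.
  induction CL as [|c CL IH]; intros H; [congruence|].
  destruct CL as [|c' CL'].
  - exists c. simpl. split; auto.
  - destruct IH as [c0 [H1 H2]]; [congruence|].
    destruct (Nat.le_ge_cases (g c) (g c0)).
    + exists c0. split; [right; auto|]. simpl in *. nia.
    + exists c. split; [left; auto|]. simpl in *. nia.
Qed.

Lemma pigeon {A} (f : A -> Z * Z) (CL : list (Z * Z)) (l : list A) : CL <> [] ->
  (forall a, In a l -> In (f a) CL) ->
  exists c, (length l <= length CL * length (filter (fun a => zpeq (f a) c) l))%nat.
Proof.
  intros Hne H. destruct (sum_le_max (fun c => length (filter (fun a => zpeq (f a) c) l)) CL Hne) as [c [_ Hc]].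
  exists c. eapply Nat.le_trans; [apply (pig_sum f CL l H)|]. exact Hc.
Qed.

Definition fl (r : R) : Z := (up r - 1)%Z.
Lemma fl_spec r : IZR (fl r) <= r < IZR (fl r) + 1.
Proof. unfold fl. rewrite minus_IZR. pose proof (archimed r). simpl. lra. Qed.

Lemma Zmod_close (a b M : Z) : (0 < M)%Z -> (a mod M = b mod M)%Z -> (- M < a - b < M)%Z -> a = b.
Proof.
  intros HM E H. pose proof (Z_div_mod_eq_full a M). pose proof (Z_div_mod_eq_full b M).
  assert (a - b = M * (a / M - b / M))%Z by lia.
  assert (a / M - b / M = 0)%Z by nia. lia.
Qed.


Lemma distb_eq p q d : distb p q d = true -> Defs.dist p q = d.
Proof. unfold distb. destruct (Req_EM_T (Defs.dist p q) d); auto. discriminate. Qed.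

Definition sc (a : R) (p : pt) : pt := (a * fst p, a * snd p).
Definition orient (a b : pt) : pt * pt := if Rle_dec (fst a) (fst b) then (a, b) else (b, a).

Lemma sc_inj a p q : 0 < a -> sc a p = sc a q -> p = q.
Proof.
  intros Ha E. destruct p as [p1 p2], q as [q1 q2]. unfold sc in E. simpl in E.
  injection E as E1 E2. apply Rmult_eq_reg_l in E1; [|lra]. apply Rmult_eq_reg_l in E2; [|lra]. subst; auto.
Qed.

Lemma sc_dist a p q : 0 < a -> Defs.dist p q = 1 -> Defs.dist (sc a p) (sc a q) = a.
Proof.
  intros Ha H. pose proof (dist_sq p q) as Hs. rewrite H in Hs.
  apply dist_eq; [lra|]. unfold sc; cbn [fst snd].
  replace ((a * fst p - a * fst q) ^ 2 + (a * snd p - a * snd q) ^ 2) with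
    (a^2 * ((fst p - fst q) ^ 2 + (snd p - snd q) ^ 2)) by ring. rewrite <- Hs. ring.
Qed.

Lemma oriented (a : R) (Q : list pt) : 0 < a -> NoDup Q ->
  exists OL : list (pt * pt), NoDup OL /\ length OL = unit_pairs Q /\
   forall e, In e OL -> Defs.dist (fst e) (snd e) = a /\ fst (fst e) <= fst (snd e) /\
     In (fst e) (map (sc a) Q) /\ In (snd e) (map (sc a) Q).
Proof.
  intros Ha HQ.
  set (Ls := filter (fun ij => Nat.ltb (fst ij) (snd ij)
                    && distb (nth (fst ij) Q (0,0)) (nth (snd ij) Q (0,0)) 1)
            (list_prod (seq 0 (length Q)) (seq 0 (length Q)))).
  set (g := fun ij : nat * nat => orient (sc a (nth (fst ij) Q (0,0))) (sc a (nth (snd ij) Q (0,0)))).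
  assert (HLs : forall ij, In ij Ls -> (fst ij < snd ij)%nat /\ (snd ij < length Q)%nat /\
      Defs.dist (nth (fst ij) Q (0,0)) (nth (snd ij) Q (0,0)) = 1).
  { intros [i j] H. unfold Ls in H. apply filter_In in H. destruct H as [H1 H2].
    apply in_prod_iff in H1. destruct H1 as [H1 H1']. apply in_seq in H1, H1'.
    apply andb_true_iff in H2. destruct H2 as [H2 H3]. apply Nat.ltb_lt in H2.
    apply distb_eq in H3. simpl in *. repeat split; auto; lia. }
  exists (map g Ls). split; [|split].
  - apply NoDup_map_inj.
    + unfold Ls. apply NoDup_filter. apply NoDup_prod; apply seq_NoDup.
    + intros [i j] [i' j'] H1 H2 E. destruct (HLs _ H1) as [L1 [L2 _]]. destruct (HLs _ H2) as [L1' [L2' _]].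
      simpl in L1, L2, L1', L2'.
      rewrite NoDup_nth with (d := (0,0)) in HQ.
      unfold g, orient in E. cbn [fst snd] in E.
      assert (Hinj : forall x y, (x < length Q)%nat -> (y < length Q)%nat ->
         sc a (nth x Q (0,0)) = sc a (nth y Q (0,0)) -> x = y).
      { intros x y Hx Hy Exy. apply sc_inj in Exy; auto. }
      destruct (Rle_dec _ _); destruct (Rle_dec _ _);
        pose proof (f_equal fst E) as E1; pose proof (f_equal snd E) as E2; cbn [fst snd] in E1, E2;
        apply Hinj in E1; try lia; apply Hinj in E2; try lia; subst; auto; lia.
  - rewrite length_map. reflexivity.
  - intros e He. apply in_map_iff in He. destruct He as [[i j] [<- Hij]].
    destruct (HLs _ Hij) as [L1 [L2 Hd]]. simpl in L1, L2.
    assert (Hi : In (sc a (nth i Q (0,0))) (map (sc a) Q)) by (apply in_map, nth_In; lia).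
    assert (Hj : In (sc a (nth j Q (0,0))) (map (sc a) Q)) by (apply in_map, nth_In; lia).
    pose proof (sc_dist a _ _ Ha Hd) as Hd'.
    unfold g, orient; cbn [fst snd]. destruct (Rle_dec _ _); cbn [fst snd]; repeat split; auto; try lra.
    rewrite dist_sym; auto.
Qed.

Section Loc.
Variables (d0 rh : R) (z : pt).
Hypothesis Hd0 : 0 < d0.
Hypothesis Hrh : 0 < rh.

Definition sg : R := rh / 2.
Definition cell (p : pt) : Z * Z := (fl (fst p / sg), fl (snd p / sg)).
Definition Mnat : nat := S (Z.to_nat (up (2 * d0 / sg))).
Definition cls (p : pt) : Z * Z :=
  (Z.modulo (fst (cell p)) (Z.of_nat Mnat), Z.modulo (snd (cell p)) (Z.of_nat Mnat)).

Lemma sg_pos : 0 < sg.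
Proof. unfold sg; lra. Qed.

Lemma Mnat_big : 2 * d0 / sg + 1 < IZR (Z.of_nat Mnat).
Proof.
  unfold Mnat. rewrite <- INR_IZR_INZ, S_INR, INR_IZR_INZ.
  pose proof (archimed (2 * d0 / sg)) as [H1 _].
  assert (0 < 2 * d0 / sg) by (apply Rdiv_lt_0_compat; [lra|apply sg_pos]).
  assert (0 <= up (2 * d0 / sg))%Z by (apply le_IZR; simpl; lra).
  rewrite Z2Nat.id; auto. lra.
Qed.

Lemma fl_close (a b : R) : Rabs (a - b) <= 2 * d0 ->
  (- Z.of_nat Mnat < fl (a / sg) - fl (b / sg) < Z.of_nat Mnat)%Z.
Proof.
  intros H. apply Rabs_le_inv in H. pose proof Mnat_big. pose proof sg_pos.
  pose proof (fl_spec (a / sg)). pose proof (fl_spec (b / sg)).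
  assert (Hab : -(2*d0/sg) <= a/sg - b/sg <= 2*d0/sg).
  { assert (Hi : 0 < / sg) by (apply Rinv_0_lt_compat; lra).
    replace (a/sg - b/sg) with ((a - b) * / sg) by (field; lra).
    unfold Rdiv. split; nra. }
  split; apply lt_IZR; rewrite ?minus_IZR, ?opp_IZR; lra.
Qed.

Lemma same_cell t h h' : Defs.dist t h = d0 -> Defs.dist t h' = d0 -> cls h = cls h' -> cell h = cell h'.
Proof.
  intros H1 H2 E. destruct (dist_coord _ _ _ H1) as [A1 B1]. destruct (dist_coord _ _ _ H2) as [A2 B2].
  apply Rabs_le_inv in A1, A2, B1, B2.
  assert (Hx : Rabs (fst h - fst h') <= 2 * d0) by (apply Rabs_le; lra).
  assert (Hy : Rabs (snd h - snd h') <= 2 * d0) by (apply Rabs_le; lra).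
  pose proof (fl_close _ _ Hx). pose proof (fl_close _ _ Hy).
  unfold cls in E. injection E as E1 E2.
  assert (0 < Z.of_nat Mnat)%Z by (unfold Mnat; lia).
  unfold cell. f_equal; eapply Zmod_close; eauto.
Qed.

Definition trn (T : pt) (p : pt) : pt := (fst p + fst T, snd p + snd T).

Lemma trn_dist T p q : Defs.dist (trn T p) (trn T q) = Defs.dist p q.
Proof. unfold Defs.dist, trn; cbn [fst snd]. f_equal. ring. Qed.

Lemma loc_from (Qs : list pt) (OL : list (pt * pt)) : NoDup OL ->
  (forall e, In e OL -> Defs.dist (fst e) (snd e) = d0 /\ fst (fst e) <= fst (snd e) /\
     In (fst e) Qs /\ In (snd e) Qs) ->
  exists D : list (pt * pt), NoDup D /\
   (forall e, In e D -> Defs.dist (fst e) (snd e) = d0 /\ fst (fst e) <= fst (snd e) /\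
      Rabs (fst (snd e) - fst z) <= rh /\ Rabs (snd (snd e) - snd z) <= rh) /\
   (length (nodup pt_eq_dec (map fst D)) <= length Qs)%nat /\
   (length (nodup pt_eq_dec (map snd D)) <= length Qs)%nat /\
   (length OL <= Mnat * Mnat * length D)%nat.
Proof.
  intros HOL HE.
  set (CL := list_prod (map Z.of_nat (seq 0 Mnat)) (map Z.of_nat (seq 0 Mnat))).
  assert (HCL : forall e, In e OL -> In (cls (snd e)) CL).
  { intros e _. unfold CL, cls. apply in_prod_iff.
    assert (0 < Z.of_nat Mnat)%Z by (unfold Mnat; lia).
    split; apply in_map_iff.
    - exists (Z.to_nat (fst (cell (snd e)) mod Z.of_nat Mnat)). split.
      + apply Z2Nat.id. apply Z.mod_pos_bound; lia.
      + apply in_seq. pose proof (Z.mod_pos_bound (fst (cell (snd e))) (Z.of_nat Mnat) H). lia.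
    - exists (Z.to_nat (snd (cell (snd e)) mod Z.of_nat Mnat)). split.
      + apply Z2Nat.id. apply Z.mod_pos_bound; lia.
      + apply in_seq. pose proof (Z.mod_pos_bound (snd (cell (snd e))) (Z.of_nat Mnat) H). lia. }
  assert (CLne : CL <> []).
  { unfold CL, Mnat. simpl. discriminate. }
  destruct (pigeon (fun e => cls (snd e)) CL OL CLne HCL) as [cl Hcl].
  assert (HCLlen : length CL = (Mnat * Mnat)%nat) by (unfold CL; rewrite length_prod, !length_map, length_seq; auto).
  rewrite HCLlen in Hcl.
  set (OLc := filter (fun e => zpeq (cls (snd e)) cl) OL).
  assert (HOLc : forall e, In e OLc -> In e OL /\ cls (snd e) = cl).
  { intros e H. unfold OLc in H. apply filter_In in H. destruct H as [H1 H2]. apply zpeq_true in H2. auto. }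
  set (cellsL := map (fun e => cell (snd e)) OLc).
  set (N := length OLc).
  set (phi := fun C => INR (pos C cellsL)).
  set (lx := fun h : pt => fst h - sg * IZR (fst (cell h))).
  set (badv := fun h h' : pt => (lx h - lx h') / (phi (cell h') - phi (cell h))).
  set (bad := flat_map (fun e => map (fun e' => badv (snd e) (snd e')) OLc) OLc).
  destruct (avoid_list bad (sg / (INR N + 1))) as [eps [Heps Hbad]].
  { apply Rdiv_lt_0_compat; [apply sg_pos|pose proof (pos_INR N); lra]. }
  set (T := fun C : Z * Z => (fst z - sg * IZR (fst C) + eps * phi C, snd z - sg * IZR (snd C))).
  set (img := fun h : pt => trn (T (cell h)) h).
  set (D := map (fun e => (trn (T (cell (snd e))) (fst e), img (snd e))) OLc).
  assert (Himg : forall h h', In h (map snd OLc) -> In h' (map snd OLc) -> img h = img h' -> h = h').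
  { intros h h' Hh Hh' E.
    destruct (zpeq (cell h) (cell h')) eqn:Ec.
    - apply zpeq_true in Ec. unfold img, trn in E. rewrite Ec in E.
      destruct h as [h1 h2], h' as [h1' h2']. cbn [fst snd] in E. injection E as E1 E2.
      f_equal; lra.
    - exfalso. assert (Ecn : cell h <> cell h') by (intro Hc; apply zpeq_true in Hc; congruence).
      assert (Hin1 : In (cell h) cellsL) by (unfold cellsL; rewrite <- map_map with (f := snd); apply in_map; auto).
      assert (Hin2 : In (cell h') cellsL) by (unfold cellsL; rewrite <- map_map with (f := snd); apply in_map; auto).
      assert (Hphi : phi (cell h) <> phi (cell h')).
      { intro Hp. apply INR_eq in Hp. apply Ecn. eapply pos_inj; eauto. }
      apply Hbad. unfold bad. apply in_flat_map.
      apply in_map_iff in Hh. destruct Hh as [e [He1 He2]].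
      apply in_map_iff in Hh'. destruct Hh' as [e' [He1' He2']].
      exists e. split; auto. apply in_map_iff. exists e'. split; auto. subst h h'.
      unfold badv. pose proof (f_equal fst E) as E1. unfold img, trn, T in E1. cbn [fst] in E1.
      unfold lx. apply Rmult_eq_reg_r with (phi (cell (snd e')) - phi (cell (snd e))); [|lra].
      unfold Rdiv. rewrite Rmult_assoc, Rinv_l by lra. lra. }
  exists D. split; [|split; [|split; [|split]]].
  -
    unfold D. apply NoDup_map_inj; [unfold OLc; apply NoDup_filter; auto|].
    intros e e' He He' E. pose proof (f_equal snd E) as E2. cbn [snd] in E2.
    apply Himg in E2; [|apply in_map; auto|apply in_map; auto].
    pose proof (f_equal fst E) as E1. cbn [fst] in E1. rewrite E2 in E1.
    destruct e as [t h], e' as [t' h']. cbn [fst snd] in *. subst h'.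
    unfold trn in E1. destruct t as [t1 t2], t' as [t1' t2']. cbn [fst snd] in E1. injection E1 as E3 E4.
    f_equal. f_equal; lra.
  - intros e He. unfold D in He. apply in_map_iff in He. destruct He as [[t h] [<- He]].
    destruct (HOLc _ He) as [He1 _]. destruct (HE _ He1) as [Hd [Hx _]]. cbn [fst snd] in *.
    split; [|split; [|split]].
    + unfold img. rewrite trn_dist. auto.
    + unfold img, trn. cbn [fst]. lra.
    +
      unfold img, trn, T. cbn [fst snd].
      pose proof (fl_spec (fst h / sg)) as [F1 F2]. pose proof sg_pos.
      assert (L1 : sg * IZR (fl (fst h / sg)) <= fst h).
      { apply Rmult_le_compat_l with (r := sg) in F1; [|lra]. unfold Rdiv in F1. rewrite <- Rmult_assoc, (Rmult_comm sg (fst h)), Rmult_assoc, Rinv_r, Rmult_1_r in F1 by lra. lra. }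
      assert (L2 : fst h < sg * IZR (fl (fst h / sg)) + sg).
      { apply Rmult_lt_compat_l with (r := sg) in F2; [|lra]. unfold Rdiv in F2. rewrite Rmult_plus_distr_l, <- Rmult_assoc, (Rmult_comm sg (fst h)), Rmult_assoc, Rinv_r, Rmult_1_r in F2 by lra. lra. }
      assert (Hp : 0 <= phi (cell h) <= INR N).
      { unfold phi. split; [apply pos_INR|]. apply le_INR. apply Nat.lt_le_incl.
        replace N with (length cellsL) by (unfold cellsL; rewrite length_map; reflexivity). apply pos_lt.
        unfold cellsL. apply (in_map (fun e => cell (snd e)) _ (t, h)). auto. }
      assert (He0 : eps * phi (cell h) <= sg * INR N / (INR N + 1)).
      { pose proof (pos_INR N). replace (sg * INR N / (INR N + 1)) with (sg / (INR N + 1) * INR N) by (field; lra).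
        apply Rmult_le_compat; lra. }
      assert (sg * INR N / (INR N + 1) <= sg).
      { pose proof (pos_INR N). apply div_le; [lra|nra]. }
      change (fl (fst h / sg)) with (fst (cell h)) in L1, L2.
      assert (0 <= eps * phi (cell h)) by (apply Rmult_le_pos; lra).
      assert (rh = 2 * sg) by (unfold sg; lra). apply Rabs_le. lra.
    + unfold img, trn, T. cbn [fst snd].
      pose proof (fl_spec (snd h / sg)) as [F1 F2]. pose proof sg_pos.
      assert (L1 : sg * IZR (fl (snd h / sg)) <= snd h).
      { apply Rmult_le_compat_l with (r := sg) in F1; [|lra]. unfold Rdiv in F1. rewrite <- Rmult_assoc, (Rmult_comm sg (snd h)), Rmult_assoc, Rinv_r, Rmult_1_r in F1 by lra. lra. }
      assert (L2 : snd h < sg * IZR (fl (snd h / sg)) + sg).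
      { apply Rmult_lt_compat_l with (r := sg) in F2; [|lra]. unfold Rdiv in F2. rewrite Rmult_plus_distr_l, <- Rmult_assoc, (Rmult_comm sg (snd h)), Rmult_assoc, Rinv_r, Rmult_1_r in F2 by lra. lra. }
      change (fl (snd h / sg)) with (snd (cell h)) in L1, L2.
      assert (rh = 2 * sg) by (unfold sg; lra). apply Rabs_le. lra.
  -
    set (G := fun t : pt => match find (fun e => if pt_eq_dec (fst e) t then true else false) OLc with
                            | Some e => trn (T (cell (snd e))) t | None => t end).
    apply Nat.le_trans with (length (map G Qs)); [apply NoDup_incl_length; [apply NoDup_nodup|] | rewrite length_map; lia].
    intros x Hx. apply nodup_In in Hx. unfold D in Hx. rewrite map_map in Hx.
    apply in_map_iff in Hx. destruct Hx as [[t h] [<- He]]. cbn [fst snd].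
    destruct (HOLc _ He) as [He1 Hc1]. destruct (HE _ He1) as [Hd [_ [Ht _]]]. cbn [fst snd] in *.
    replace (trn (T (cell h)) t) with (G t); [apply in_map; auto|].
    unfold G. destruct (find _ OLc) as [e'|] eqn:Ef.
    + apply find_some in Ef. destruct Ef as [Hin' Hf].
      destruct (pt_eq_dec (fst e') t) as [Het|]; [|discriminate].
      destruct (HOLc _ Hin') as [Hin'1 Hc2]. destruct (HE _ Hin'1) as [Hd' _].
      rewrite Het in Hd'. f_equal. f_equal. apply (same_cell t); auto. congruence.
    + exfalso. apply (find_none _ _ Ef) in He. cbn [fst] in He.
      destruct (pt_eq_dec t t); [discriminate|congruence].
  -
    apply Nat.le_trans with (length (map img Qs)); [apply NoDup_incl_length; [apply NoDup_nodup|] | rewrite length_map; lia].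
    intros x Hx. apply nodup_In in Hx. unfold D in Hx. rewrite map_map in Hx.
    apply in_map_iff in Hx. destruct Hx as [[t h] [<- He]]. cbn [fst snd].
    destruct (HOLc _ He) as [He1 _]. destruct (HE _ He1) as [_ [_ [_ Hh]]]. apply in_map; auto.
  - unfold D. rewrite length_map. unfold OLc. lia.
Qed.

End Loc.

Lemma dist_pos_neq p q d : 0 < d -> Defs.dist p q = d -> p <> q.
Proof. intros Hd H E. subst q. unfold Defs.dist in H. rewrite !Rminus_diag in H. replace (0^2+0^2) with 0 in H by ring. rewrite sqrt_0 in H. lra. Qed.

Lemma nodup_pre a b l : a <> b -> fst a <= fst b -> sorted_x (b :: l) -> NoDup (a :: b :: l).
Proof.
  intros H1 H2 H3. constructor.
  - intros [E|E]; [congruence|]. pose proof (sorted_x_lt b l H3 a E). lra.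
  - apply sorted_x_nodup; auto.
Qed.

Lemma caseB (delta d : nat -> R) (dpos : forall i, 0 < d i) (RR k n : nat) :
  k = (3*RR + 4)%nat -> (1 <= n)%nat ->
  (forall i, (i < k)%nat -> d i = delta i) ->
  forall Q, NoDup Q -> (length Q <= n)%nat ->
  (unit_pairs Q * n ^ (RR + 1) <=
    Mnat (d O) (rho (d 1%nat) (d 2%nat)) * Mnat (d O) (rho (d 1%nat) (d 2%nat)) * Ck_max k delta n)%nat.
Proof.
  intros Hk Hn Hd Q HQ HQn.
  set (b := d 1%nat). set (c := d 2%nat). set (z := ((0,0) : pt)).
  set (rh := rho b c).
  assert (Hb : 0 < b) by apply dpos. assert (Hc : 0 < c) by apply dpos.
  assert (Hrh : 0 < rh) by (apply rho_pos; auto).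
  destruct (oriented (d O) Q (dpos O) HQ) as [OL [HOL1 [HOL2 HOL3]]].
  destruct (loc_from (d O) rh z (dpos O) Hrh (map (sc (d O)) Q) OL HOL1 HOL3)
    as [D [HD1 [HD2 [HD3 [HD4 HD5]]]]].
  rewrite length_map in HD3, HD4. rewrite HOL2 in HD5.
  set (M := Mnat (d O) rh) in *.
  set (Y := (fst z + sqbc b c, snd z)).
  set (F := fun pr : (pt * pt) * list nat =>
     fst (fst pr) :: snd (fst pr) :: bridge b c z (snd (fst pr)) :: body d false RR 3 Y (snd pr)).
  set (Sl := map F (list_prod D (alll (S RR) n))).
  set (Cs := nodup pt_eq_dec (map fst D) :: nodup pt_eq_dec (map snd D) ::
             map (bridge b c z) (nodup pt_eq_dec (map snd D)) :: bodyC d false RR 3 Y n).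
  assert (HL : length Sl = (length D * n ^ (RR + 1))%nat).
  { unfold Sl. rewrite length_map, length_prod, alll_length. replace (RR+1)%nat with (S RR) by lia. auto. }
  assert (Hmain : (length Sl <= Ck_max k delta n)%nat).
  { eapply Nat.le_trans; [|apply (Ck_max_ge k delta n (Pof Cs))].
    - apply count_ge.
      + unfold Sl. apply NoDup_map_inj; [apply NoDup_prod; auto; apply alll_nodup|].
        intros [e js] [e' js'] H1 H2 E. apply in_prod_iff in H1, H2. cbn [fst snd] in *.
        destruct (alll_in _ _ _ (proj2 H1)) as [L1 _]. destruct (alll_in _ _ _ (proj2 H2)) as [L2 _].
        assert (Ee1 : fst e = fst e') by exact (f_equal (hd X0) E).
        assert (Ee2 : snd e = snd e') by exact (f_equal (fun l => nth 1 l X0) E).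
        assert (Eb : body d false RR 3 Y js = body d false RR 3 Y js') by exact (f_equal (skipn 3) E).
        apply body_inj in Eb; auto. subst js'. destruct e, e'; cbn [fst snd] in *; subst; auto.
      + intros t Ht. unfold Sl in Ht. apply in_map_iff in Ht. destruct Ht as [[e js] [<- Hin]].
        apply in_prod_iff in Hin. cbn [fst snd] in Hin. destruct Hin as [He Hjs].
        destruct (alll_in _ _ _ Hjs) as [L1 HF].
        destruct (HD2 e He) as [E1 [E2 [E3 E4]]].
        destruct (bridge_ok b c z (snd e) Hb Hc E3 E4) as [B1 [B2 [B3 B4]]].
        destruct (body_ok d dpos false RR 3 Y js) as [Hch Hs].
        destruct (body_hd d false RR 3 Y js) as [rest Hr].
        assert (Hlen : length (F (e, js)) = S k).
        { unfold F; cbn [fst snd length]. rewrite body_len. subst k. lia. }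
        split.
        * apply in_tuples_Pof; auto. unfold F, Cs; cbn [fst snd].
          constructor; [apply nodup_In, in_map; auto|].
          constructor; [apply nodup_In, in_map; auto|].
          constructor; [apply in_map, nodup_In, in_map; auto|].
          apply body_C; auto.
        * apply (valid_of' delta d); auto.
          -- unfold F; cbn [fst snd]. rewrite Hr in *. split; [exact E1|]. split; [exact B1|]. split; [exact B2|]. exact Hch.
          -- unfold F; cbn [fst snd]. rewrite Hr in *. apply nodup_pre.
             ++ eapply dist_pos_neq; [apply (dpos O)|exact E1].
             ++ exact E2.
             ++ split; [lra|]. split; [unfold Y; cbn [fst]; lra|]. exact Hs.
    - intros i _. apply Pof_ok. unfold Cs. constructor; [lia|].
      constructor; [lia|]. constructor; [rewrite length_map; lia|]. apply bodyC_len; auto. }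
  rewrite HL in Hmain. nia.
Qed.

Lemma caseB1 (delta d : nat -> R) (dpos : forall i, 0 < d i) (n : nat) :
  (forall i, (i < 1)%nat -> d i = delta i) ->
  forall Q, NoDup Q -> (length Q <= n)%nat ->
  (unit_pairs Q <=
    Mnat (d O) (rho (d 1%nat) (d 2%nat)) * Mnat (d O) (rho (d 1%nat) (d 2%nat)) * Ck_max 1 delta n)%nat.
Proof.
  intros Hd Q HQ HQn.
  set (rh := rho (d 1%nat) (d 2%nat)). set (z := ((0,0) : pt)).
  assert (Hrh : 0 < rh) by (apply rho_pos; auto).
  destruct (oriented (d O) Q (dpos O) HQ) as [OL [HOL1 [HOL2 HOL3]]].
  destruct (loc_from (d O) rh z (dpos O) Hrh (map (sc (d O)) Q) OL HOL1 HOL3)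
    as [D [HD1 [HD2 [HD3 [HD4 HD5]]]]].
  rewrite length_map in HD3, HD4. rewrite HOL2 in HD5.
  set (M := Mnat (d O) rh) in *.
  set (F := fun e : pt * pt => [fst e; snd e]).
  set (Sl := map F D).
  set (Cs := [nodup pt_eq_dec (map fst D); nodup pt_eq_dec (map snd D)]).
  assert (Hmain : (length Sl <= Ck_max 1 delta n)%nat).
  { eapply Nat.le_trans; [|apply (Ck_max_ge 1 delta n (Pof Cs))].
    - apply count_ge.
      + unfold Sl. apply NoDup_map_inj; auto.
        intros [a b] [a' b'] _ _ E. unfold F in E. cbn [fst snd] in E. injection E as -> ->. auto.
      + intros t Ht. unfold Sl in Ht. apply in_map_iff in Ht. destruct Ht as [e [<- He]].
        destruct (HD2 e He) as [E1 [E2 _]].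
        split.
        * apply in_tuples_Pof; auto. unfold F, Cs.
          constructor; [apply nodup_In, in_map; auto|].
          constructor; [apply nodup_In, in_map; auto|]. constructor.
        * apply (valid_of' delta d); auto.
          -- unfold F. simpl. split; auto.
          -- unfold F. constructor; [|constructor; [simpl; auto|constructor]].
             intros [Ee|[]]. eapply dist_pos_neq; [apply (dpos O)|exact E1|]. auto.
    - intros i _. apply Pof_ok. unfold Cs. constructor; [lia|]. constructor; [lia|]. constructor. }
  unfold Sl in Hmain. rewrite length_map in Hmain. nia.
Qed.

Lemma u2_attained n : exists Q, NoDup Q /\ (length Q <= n)%nat /\ unit_pairs Q = u2 n.
Proof.
  unfold u2.
  destruct (maxnat_spec (fun m => exists P : list pt, NoDup P /\ (length P <= n)%nat /\ unit_pairs P = m) (n * n))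
    as [[Q [H1 [H2 H3]]] _].
  - exists 0%nat. exists []. repeat split; [constructor|simpl; lia].
  - intros m [P [H1 [H2 <-]]]. unfold unit_pairs. eapply Nat.le_trans; [apply filter_length_le|].
    rewrite length_prod, length_seq. nia.
  - exists Q. auto.
Qed.

Lemma final_ineq (u p M C : nat) : (1 <= M)%nat -> (u * p <= M * M * C)%nat ->
  / INR (M * M) * (INR p * INR u) <= INR C.
Proof.
  intros HM H. apply le_INR in H. rewrite !mult_INR in H.
  assert (0 < INR M) by (apply lt_0_INR; lia).
  rewrite mult_INR. apply Rmult_le_reg_l with (INR M * INR M); [nra|].
  rewrite <- Rmult_assoc, Rinv_r by nra. lra.
Qed.

Theorem proposition3p1 (k : nat) (delta : nat -> R) :
  (1 <= k)%nat ->
  (forall i, (i < k)%nat -> 0 < delta i) ->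
  ((Nat.modulo k 3 = 0%nat \/ Nat.modulo k 3 = 2%nat) ->
     exists c : R, 0 < c /\ exists N : nat, forall n : nat, (N <= n)%nat ->
       c * INR (n ^ (Nat.div (k + 1) 3 + 1)) <= INR (Ck_max k delta n))
  /\
  (Nat.modulo k 3 = 1%nat ->
     exists c : R, 0 < c /\ exists N : nat, forall n : nat, (N <= n)%nat ->
       c * (INR (n ^ Nat.div (k - 1) 3) * INR (u2 n)) <= INR (Ck_max k delta n)).
Proof.
  intros Hk Hpos.
  set (d := fun i => if Nat.ltb i k then delta i else 1).
  assert (dpos : forall i, 0 < d i).
  { intros i. unfold d. destruct (Nat.ltb i k) eqn:E; [apply Hpos; apply Nat.ltb_lt; auto|lra]. }
  assert (Hd : forall i, (i < k)%nat -> d i = delta i).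
  { intros i Hi. unfold d. apply Nat.ltb_lt in Hi. rewrite Hi. auto. }
  pose proof (Nat.div_mod k 3 ltac:(lia)) as Hdm.
  set (m := (k / 3)%nat) in *.
  split.
  - intros Hmod. exists 1. split; [lra|]. exists 1%nat. intros n Hn. rewrite Rmult_1_l. apply le_INR.
    destruct Hmod as [H0|H2].
    + rewrite H0 in Hdm. destruct m as [|m']; [lia|].
      assert (Hex : ((k + 1) / 3 + 1)%nat = (m' + 2)%nat).
      { replace (k + 1)%nat with (1 + (S m') * 3)%nat by lia. rewrite Nat.div_add by lia. simpl. lia. }
      rewrite Hex. apply (caseA delta d dpos true m' k n); auto. lia.
    + rewrite H2 in Hdm.
      assert (Hex : ((k + 1) / 3 + 1)%nat = (m + 2)%nat).
      { replace (k + 1)%nat with (0 + (m + 1) * 3)%nat by lia. rewrite Nat.div_add by lia. simpl. lia. }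
      rewrite Hex. apply (caseA delta d dpos false m k n); auto. lia.
  - intros H1. rewrite H1 in Hdm.
    set (M := Mnat (d O) (rho (d 1%nat) (d 2%nat))).
    assert (HM : (1 <= M)%nat) by (unfold M, Mnat; lia).
    exists (/ INR (M * M)). split.
    { apply Rinv_0_lt_compat. apply lt_0_INR. nia. }
    exists 1%nat. intros n Hn.
    assert (Hex : ((k - 1) / 3)%nat = m).
    { replace (k - 1)%nat with (0 + m * 3)%nat by lia. rewrite Nat.div_add by lia. simpl. lia. }
    rewrite Hex.
    destruct (u2_attained n) as [Q [HQ1 [HQ2 HQ3]]]. rewrite <- HQ3.
    apply final_ineq; auto.
    destruct m as [|m'].
    + assert (k = 1%nat) by lia. subst k. simpl. rewrite Nat.mul_1_r.
      apply (caseB1 delta d dpos n); auto.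
    + replace (S m') with (m' + 1)%nat by lia.
      apply (caseB delta d dpos m' k n); auto. lia.
Qed.
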